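(* Let $d\in\{1,2,3,7,11\}$, $K=\mathbb{Q}(\sqrt{-d})$, $\mathcal{O}_d$ its ring of integers, $\Delta$ a positive integer not of the form $\beta\bar\beta$ with $\beta\in\mathcal{O}_d$, $k\ge1$ odd, and $$P_{k,\Delta}(z,\bar z)=\sum_{\substack{(a,b,c)\in\mathbb{Z}\times\mathcal{O}_d\times\mathbb{Z}\\ b\bar b-ac=\Delta,\ c<0<a}}\left(az\bar z+bz+\bar b\bar z+c\right)^k .$$ Let $\varepsilon=\begin{psmallmatrix}-1&0\\0&1\end{psmallmatrix}$, $S=\begin{psmallmatrix}0&-1\\1&0\end{psmallmatrix}$, $T=\begin{psmallmatrix}1&1\\0&1\end{psmallmatrix}$. Then: (1) $P_{k,\Delta}(\bar z,z)=P_{k,\Delta}(z,\bar z)$; (2) $P_{k,\Delta}(uz,\bar u\bar z)=P_{k,\Delta}(z,\bar z)$ for every unit $u\in\mathcal{O}_d$; (3) $P_{k,\Delta}|(\mathbf{1}+S)=0$; (4) $P_{k,\Delta}|(\mathbf{1}+TS\varepsilon-T)=0$; (5) if $d=7$, then with $\omega=\frac{1+\sqrt{-7}}{2}$ and $T_\omega=\begin{psmallmatrix}1&\omega\\0&1\end{psmallmatrix}$, $$P_{k,\Delta}|(\mathbf{1}-T_\omega-ST^{-1}T_\omega S-TT_\omega^{-1}ST_\omega)=0.$$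
   Context: Polynomials are in the independent variables $z,\bar z$. For a polynomial $P(z,\bar z)$ of degree at most $k$ in each variable and $\gamma=\begin{psmallmatrix}a&b\\c&e\end{psmallmatrix}\in\mathbf{GL}(2,\mathbb{C})$, $(P|\gamma)(z,\bar z)=(cz+e)^k\overline{(cz+e)}^kP\!\left(\frac{az+b}{cz+e},\frac{\bar a\bar z+\bar b}{\bar c\bar z+\bar e}\right)$; this is a right action ($P|(\gamma_1\gamma_2)=(P|\gamma_1)|\gamma_2$) extended linearly to the group ring, $\mathbf{1}$ is the identity matrix. *)

(* Defs.v *)
From HB Require Import structures.
From mathcomp Require Import all_boot all_order all_algebra.
Set Implicit Arguments. Unset Strict Implicit. Unset Printing Implicit Defensive.
Import Order.TTheory GRing.Theory Num.Theory.
Local Open Scope ring_scope.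

(* Complex numbers: an arbitrary numClosedFieldType C (e.g. C = R[i]),
   with conjugation x^* and 'i. *)

Section Defs.
Variable C : numClosedFieldType.

Definition sqrtm (d : nat) : C := 'i * sqrtC (d%:R).

(* Z-basis generator of O_d = ring of integers of Q(sqrt(-d)), d squarefree:
   (1+sqrt(-d))/2 if -d = 1 mod 4 (i.e. d = 3 mod 4), sqrt(-d) otherwise. *)
Definition omega_d (d : nat) : C :=
  if (d %% 4 == 3)%N then (1 + sqrtm d) / 2 else sqrtm d.

Definition in_Od (d : nat) (b : C) : Prop :=
  exists x y : int, b = x%:~R + y%:~R * omega_d d.

Definition unit_Od (d : nat) (u : C) : Prop :=
  in_Od d u /\ exists v : C, in_Od d v /\ u * v = 1.

(* Polynomials in the independent variables z, zbar:
   {poly {poly C}}; inner variable = z, outer variable = zbar. *)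
Definition cst (c : C) : {poly {poly C}} := c%:P%:P.
Definition Zv : {poly {poly C}} := ('X)%:P.
Definition Wv : {poly {poly C}} := 'X.

(* Coefficient of z^i zbar^j in P is (P`_j)`_i.
   eval2 P p q = P(p, q)  (substitution of polynomials p, q for z, zbar). *)
Definition eval2 (P p q : {poly {poly C}}) : {poly {poly C}} :=
  \sum_(j < size P) \sum_(i < size P`_j) cst ((P`_j)`_i) * p ^+ i * q ^+ j.

(* The index set {(a,b,c) in Z x O_d x Z | b bbar - a c = Delta,
   c < 0 < a} is finite: a, -c in [1,Delta] and b = x + y omega_d with
   |x|,|y| <= Delta, so we sum over these boxes with the exact
   condition as a filter. *)
Definition Pk (d Delta k : nat) : {poly {poly C}} :=
  \sum_(a < Delta.+1) \sum_(c < Delta.+1)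
   \sum_(x < (2 * Delta).+1) \sum_(y < (2 * Delta).+1)
    let ai : int := (a : nat)%:Z in
    let ci : int := - (c : nat)%:Z in
    let b : C := ((x : nat)%:Z - Delta%:Z)%:~R
                 + ((y : nat)%:Z - Delta%:Z)%:~R * omega_d d in
    if [&& (ci < 0), (0 < ai) & (b * b^* - ai%:~R * ci%:~R == Delta%:R)]
    then (cst ai%:~R * Zv * Wv + cst b * Zv + cst b^* * Wv + cst ci%:~R) ^+ k
    else 0.

Definition mx2 (a b c e : C) : 'M[C]_2 :=
  \matrix_(i, j) if (i : nat) == 0%N then (if (j : nat) == 0%N then a else b)
                 else (if (j : nat) == 0%N then c else e).

(* Weight k slash action of g = (a b; c e) on P of degree <= k in each variable:
   (P|g)(z,zbar) = (cz+e)^k (cbar zbar + ebar)^k P((az+b)/(cz+e), (abar zbar+bbar)/(cbar zbar+ebar)),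
   expanded monomial by monomial. *)
Definition slash (k : nat) (P : {poly {poly C}}) (g : 'M[C]_2) : {poly {poly C}} :=
  let a := g ord0 ord0 in let b := g ord0 ord_max in
  let c := g ord_max ord0 in let e := g ord_max ord_max in
  \sum_(i < k.+1) \sum_(j < k.+1)
    cst ((P`_j)`_i)
    * (cst a * Zv + cst b) ^+ i * (cst c * Zv + cst e) ^+ (k - i)
    * (cst a^* * Wv + cst b^*) ^+ j * (cst c^* * Wv + cst e^*) ^+ (k - j).

Definition mat_eps : 'M[C]_2 := mx2 (-1) 0 0 1.
Definition mat_S : 'M[C]_2 := mx2 0 (-1) 1 0.
Definition mat_T : 'M[C]_2 := mx2 1 1 0 1.

End Defs.

(* Main.v *)
Require Import Defs.
From HB Require Import structures.
From mathcomp Require Import all_boot all_order all_algebra ring lra zify.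
Set Implicit Arguments. Unset Strict Implicit. Unset Printing Implicit Defensive.
Import Order.TTheory GRing.Theory Num.Theory.
Local Open Scope ring_scope.

Section PolyEv.
Variable C : numClosedFieldType.
Implicit Types (R P Q : {poly {poly C}}) (z w x y : C).

Definition ev R z w : C := (R.[w%:P]).[z].

Lemma evD R1 R2 z w : ev (R1 + R2) z w = ev R1 z w + ev R2 z w.
Proof. by rewrite /ev !hornerD. Qed.
Lemma evN R z w : ev (- R) z w = - ev R z w.
Proof. by rewrite /ev !hornerN. Qed.
Lemma evB R1 R2 z w : ev (R1 - R2) z w = ev R1 z w - ev R2 z w.
Proof. by rewrite evD evN. Qed.
Lemma evM R1 R2 z w : ev (R1 * R2) z w = ev R1 z w * ev R2 z w.
Proof. by rewrite /ev !hornerM. Qed.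
Lemma ev0 z w : ev 0 z w = 0.
Proof. by rewrite /ev !horner0. Qed.
Lemma evX R n z w : ev (R ^+ n) z w = ev R z w ^+ n.
Proof. by elim: n => [|n IH]; rewrite ?expr0 ?exprS ?evM ?IH // /ev !hornerC. Qed.
Lemma ev_sum (I : Type) (r : seq I) (Pr : pred I) (F : I -> {poly {poly C}}) z w :
  ev (\sum_(i <- r | Pr i) F i) z w = \sum_(i <- r | Pr i) ev (F i) z w.
Proof.
elim/big_rec2: _ => [|i y1 y2 _ <-]; first exact: ev0.
by rewrite evD.
Qed.
Lemma ev_cst c z w : ev (cst c) z w = c.
Proof. by rewrite /ev /cst !hornerC. Qed.
Lemma ev_Zv z w : ev (Zv C) z w = z.
Proof. by rewrite /ev /Zv hornerC hornerX. Qed.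
Lemma ev_Wv z w : ev (Wv C) z w = w.
Proof. by rewrite /ev /Wv hornerX hornerC. Qed.

Lemma ev_expand R x y :
  ev R x y = \sum_(j < size R) \sum_(i < size (R`_j)) R`_j`_i * x ^+ i * y ^+ j.
Proof.
rewrite /ev (horner_coef R) horner_sum; apply: eq_bigr => j _.
rewrite hornerM horner_exp hornerC (horner_coef R`_j) mulr_suml; apply: eq_bigr => i _.
by [].
Qed.

Lemma ev_expand_wide K R x y :
  (size R <= K)%N -> (forall j, (size (R`_j)%R <= K)%N) ->
  ev R x y = \sum_(j < K) \sum_(i < K) R`_j`_i * x ^+ i * y ^+ j.
Proof.
move=> hR hj.
rewrite /ev (horner_coef_wide (y%:P) hR) horner_sum; apply: eq_bigr => j _.
rewrite hornerM horner_exp hornerC (horner_coef_wide x (hj j)) mulr_suml; apply: eq_bigr => i _.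
by [].
Qed.

Lemma ev_eval2 R p q z w : ev (eval2 R p q) z w = ev R (ev p z w) (ev q z w).
Proof.
rewrite /eval2 ev_sum (ev_expand R); apply: eq_bigr => j _.
rewrite ev_sum; apply: eq_bigr => i _.
by rewrite !evM !evX ev_cst.
Qed.

Lemma poly_all0 (p : {poly C}) : (forall x, p.[x] = 0) -> p = 0.
Proof.
move=> H; apply/eqP; apply: contraT => nz.
have := max_poly_roots nz (rs := [seq i%:R | i <- iota 0 (size p)]).
rewrite size_map size_iota ltnn; apply.
  by apply/allP => x _; rewrite /root H.
rewrite map_inj_uniq ?iota_uniq // => a b /eqP; rewrite eqr_nat => /eqP; done.
Qed.

Lemma ev_all0 R : (forall z w, ev R z w = 0) -> R = 0.
Proof.
move=> H; apply/polyP => j; rewrite coef0; apply: poly_all0 => z.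
have h0 : map_poly (horner_eval z) R = 0.
  apply: poly_all0 => w.
  have e : horner_eval z (w%:P) = w by exact: hornerC.
  rewrite -{1}e horner_map; exact: H z w.
have := congr1 (fun p : {poly C} => p`_j) h0; rewrite coef_map coef0 /=; exact.
Qed.

Lemma ev_dense R (f g : {poly C}) : f != 0 -> g != 0 ->
  (forall z w, f.[z] != 0 -> g.[w] != 0 -> ev R z w = 0) -> R = 0.
Proof.
move=> nf ng H.
have : R * f%:P * g^:P = 0.
  apply: ev_all0 => z w; rewrite !evM.
  have -> : ev f%:P z w = f.[z] by rewrite /ev hornerC.
  have -> : ev g^:P z w = g.[w].
    by rewrite /ev (horner_map (@polyC C)) hornerC.
  have [fz|fz] := eqVneq f.[z] 0; first by rewrite fz mulr0 mul0r.
  have [gw|gw] := eqVneq g.[w] 0; first by rewrite gw mulr0.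
  by rewrite H // !mul0r.
move/eqP; rewrite !mulf_eq0 polyC_eq0 (negbTE nf) orbF map_polyC_eq0 (negbTE ng) orbF.
by move/eqP.
Qed.

End PolyEv.

Section Bideg.
Variable C : numClosedFieldType.
Implicit Types (R P Q : {poly {poly C}}) (z w x y : C).

Definition bideg (Kz Kw : nat) P :=
  (size P <= Kw.+1)%N /\ forall j, (size (P`_j)%R <= Kz.+1)%N.

Lemma bidegW Kz Kw Kz' Kw' P : (Kz <= Kz')%N -> (Kw <= Kw')%N ->
  bideg Kz Kw P -> bideg Kz' Kw' P.
Proof.
move=> h1 h2 [hs hj]; split; first by apply: leq_trans hs _.
by move=> j; apply: leq_trans (hj j) _.
Qed.

Lemma bideg0 Kz Kw : bideg Kz Kw (0 : {poly {poly C}}).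
Proof. by split => [|j]; rewrite ?size_poly0 // coef0 size_poly0. Qed.

Lemma bidegD Kz Kw P Q : bideg Kz Kw P -> bideg Kz Kw Q -> bideg Kz Kw (P + Q).
Proof.
move=> [hP hPj] [hQ hQj]; split.
  by apply: leq_trans (size_add _ _) _; rewrite geq_max hP hQ.
move=> j; rewrite coefD; apply: leq_trans (size_add _ _) _.
by rewrite geq_max hPj hQj.
Qed.

Lemma bideg_sum Kz Kw (I : Type) (r : seq I) (p : pred I) (F : I -> {poly {poly C}}) :
  (forall i, p i -> bideg Kz Kw (F i)) -> bideg Kz Kw (\sum_(i <- r | p i) F i).
Proof.
move=> H; apply: (big_ind (bideg Kz Kw)); [exact: bideg0|exact: bidegD|exact: H].
Qed.

Lemma bidegM Kz1 Kw1 Kz2 Kw2 P Q : bideg Kz1 Kw1 P -> bideg Kz2 Kw2 Q ->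
  bideg (Kz1 + Kz2) (Kw1 + Kw2) (P * Q).
Proof.
move=> [hP hPj] [hQ hQj]; split.
  apply: leq_trans (size_mul_leq _ _) _.
  have := leq_add hP hQ; lia.
move=> j; rewrite coefM.
apply: (big_ind (fun p : {poly C} => (size p <= (Kz1 + Kz2).+1)%N)).
- by rewrite size_poly0.
- by move=> p1 p2 h1 h2; apply: leq_trans (size_add _ _) _; rewrite geq_max h1 h2.
- move=> i _; apply: leq_trans (size_mul_leq _ _) _.
  have := leq_add (hPj i) (hQj (j - i)%N); lia.
Qed.

Lemma bidegX K1 K2 P n : bideg K1 K2 P -> bideg (K1 * n) (K2 * n) (P ^+ n).
Proof.
move=> h; elim: n => [|n IH].
  rewrite expr0 !muln0; split; first by rewrite size_poly1.
  by move=> j; rewrite coef1; case: (j == 0%N); rewrite ?size_poly1 ?size_poly0.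
by rewrite exprS !mulnS; apply: bidegM.
Qed.

Lemma bideg_cst c : bideg 0 0 (cst c).
Proof.
split; first by rewrite /cst size_polyC leq_b1.
by move=> j; rewrite /cst coefC; case: (j == 0%N); rewrite ?size_polyC ?leq_b1 ?size_poly0.
Qed.

Lemma bideg_Zv : bideg 1 0 (Zv C).
Proof.
split; first by rewrite /Zv size_polyC leq_b1.
by move=> j; rewrite /Zv coefC; case: (j == 0%N); rewrite ?size_polyX ?size_poly0.
Qed.

Lemma bideg_Wv : bideg 0 1 (Wv C).
Proof.
split; first by rewrite /Wv size_polyX.
by move=> j; rewrite /Wv coefX; case: (j == 1%N); rewrite ?size_poly1 ?size_poly0.
Qed.

Lemma bideg_form a b b' c :
  bideg 1 1 (cst a * Zv C * Wv C + cst b * Zv C + cst b' * Wv C + cst c).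
Proof.
have h1 := bideg_cst a; have h2 := bideg_cst b; have h3 := bideg_cst b'.
have h4 := bideg_cst c.
apply: bidegD; first apply: bidegD; first apply: bidegD.
- exact: (bidegM (bidegM h1 bideg_Zv) bideg_Wv).
- exact: (bidegW _ _ (bidegM h2 bideg_Zv)).
- exact: (bidegW _ _ (bidegM h3 bideg_Wv)).
- exact: (bidegW _ _ h4).
Qed.

Lemma pow_div_lem (A B : C) (i k : nat) : B != 0 -> (i <= k)%N ->
  B ^+ k * (A / B) ^+ i = A ^+ i * B ^+ (k - i).
Proof.
move=> hB hik; rewrite -{1}(subnK hik) exprD expr_div_n.
have hBi : B ^+ i != 0 by rewrite expf_neq0.
by field.
Qed.

Lemma slash_ev k P (g : 'M[C]_2) z w :
  bideg k k P ->
  let a := g ord0 ord0 in let b := g ord0 ord_max in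
  let c := g ord_max ord0 in let e := g ord_max ord_max in
  c * z + e != 0 -> c^* * w + e^* != 0 ->
  ev (slash k P g) z w =
  (c * z + e) ^+ k * (c^* * w + e^*) ^+ k *
  ev P ((a * z + b) / (c * z + e)) ((a^* * w + b^*) / (c^* * w + e^*)).
Proof.
move=> [hs hj] a b c e h1 h2.
rewrite (ev_expand_wide _ _ hs hj) exchange_big mulr_sumr /slash ev_sum.
apply: eq_bigr => i _; rewrite mulr_sumr ev_sum; apply: eq_bigr => j _.
rewrite !evM !evX !evD !evM !ev_cst ev_Zv ev_Wv.
have hi : (i <= k)%N by rewrite -ltnS.
have hj' : (j <= k)%N by rewrite -ltnS.
rewrite -/a -/b -/c -/e.
transitivity (P`_j`_i * (((c * z + e) ^+ k * ((a * z + b) / (c * z + e)) ^+ i)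
   * ((c^* * w + e^*) ^+ k * ((a^* * w + b^*) / (c^* * w + e^*)) ^+ j))).
  by rewrite !pow_div_lem //; ring.
by ring.
Qed.

End Bideg.

Definition qt := (int * int * int * int)%type.
Definition qa (q : qt) := q.1.1.1.
Definition qx (q : qt) := q.1.1.2.
Definition qy (q : qt) := q.1.2.
Definition qc (q : qt) := q.2.
Definition Nf (t n x y : int) : int := x * x + t * x * y + n * y * y.
Definition inS (t n : int) (D : nat) (q : qt) : bool :=
  [&& qc q < 0, 0 < qa q & Nf t n (qx q) (qy q) - qa q * qc q == D%:Z].

Definition Ibox (D : nat) := ('I_D.+1 * 'I_D.+1 * 'I_(2 * D).+1 * 'I_(2 * D).+1)%type.
Definition enc (D : nat) (i : Ibox D) : qt :=
  ((i.1.1.1 : nat)%:Z, (i.1.2 : nat)%:Z - D%:Z, (i.2 : nat)%:Z - D%:Z, - (i.1.1.2 : nat)%:Z).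
Definition Sseq (t n : int) (D : nat) : seq qt :=
  [seq q <- [seq enc i | i <- index_enum (Ibox D)] | inS t n D q].

Lemma Nf_lb (t n x y : int) : (t = 0 \/ t = 1) -> 1 <= n ->
  x * x + y * y <= 2 * Nf t n x y.
Proof.
rewrite /Nf => ht hn.
have h1 : 0 <= (x + y) * (x + y) by rewrite -expr2 sqr_ge0.
have h2 : 0 <= (n - 1) * (y * y) by apply: mulr_ge0; [lia| rewrite -expr2 sqr_ge0].
have h3 : 0 <= x * x by rewrite -expr2 sqr_ge0.
by case: ht => ->; nia.
Qed.

Lemma sqr_ge0i (v : int) : 0 <= v * v.
Proof. by rewrite -expr2 sqr_ge0. Qed.

Lemma sq_bound (v B : int) : 0 <= B -> v * v <= 2 * B - 2 -> - B <= v <= B.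
Proof.
move=> hB hv; have hB2 := sqr_ge0i B.
apply/andP; split.
  case: (lerP (- B) v) => // h.
  have := @mulr_ge0 _ (- v - B - 1) (- v + B + 1); lia.
case: (lerP v B) => // h.
have := @mulr_ge0 _ (v - B - 1) (v + B + 1); lia.
Qed.

Lemma inS_bound t n D q : (t = 0 \/ t = 1) -> 1 <= n -> inS t n D q ->
  [/\ 0 < qa q <= D%:Z, 0 < - qc q <= D%:Z, - D%:Z <= qx q <= D%:Z & - D%:Z <= qy q <= D%:Z].
Proof.
move=> ht hn /and3P [hc ha /eqP hN].
have := Nf_lb (qx q) (qy q) ht hn.
move: hc ha hN; set a := qa q; set c := qc q; set x := qx q; set y := qy q; set N := Nf _ _ _ _.
move=> hc ha hN hl.
have hx2 := sqr_ge0i x; have hy2 := sqr_ge0i y.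
have hN0 : 0 <= N by lia.
have h1 := @mulr_ge0 _ (a - 1) (- c - 1).
have h2 := @mulr_ge0 _ a (- c - 1).
have h3 := @mulr_ge0 _ (a - 1) (- c).
have hND : N <= D%:Z - 1 by nia.
split.
- by apply/andP; split; nia.
- by apply/andP; split; nia.
- by apply: sq_bound; lia.
- by apply: sq_bound; lia.
Qed.

Lemma Sseq_uniq t n D : uniq (Sseq t n D).
Proof.
rewrite filter_uniq // map_inj_uniq ?index_enum_uniq //.
move=> [[[a1 c1] x1] y1] [[[a2 c2] x2] y2] /= [e1 e2 e3 e4].
have ea : a1 = a2 by apply: ord_inj; lia.
have ec : c1 = c2 by apply: ord_inj; lia.
have ex : x1 = x2 by apply: ord_inj; lia.
have ey : y1 = y2 by apply: ord_inj; lia.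
by rewrite ea ec ex ey.
Qed.

Lemma memS t n D q : (t = 0 \/ t = 1) -> 1 <= n ->
  (q \in Sseq t n D) = inS t n D q.
Proof.
move=> ht hn; rewrite mem_filter; case hq: (inS t n D q) => //=.
have [/andP[ha1 ha2] /andP[hc1 hc2] /andP[hx1 hx2] /andP[hy1 hy2]] := inS_bound ht hn hq.
have Ha : (absz (qa q) < D.+1)%N by lia.
have Hc : (absz (- qc q) < D.+1)%N by lia.
have Hx : (absz (qx q + D%:Z)%R < (2 * D).+1)%N by lia.
have Hy : (absz (qy q + D%:Z)%R < (2 * D).+1)%N by lia.
apply/mapP; exists (Ordinal Ha, Ordinal Hc, Ordinal Hx, Ordinal Hy).
  exact: mem_index_enum.
rewrite /enc /=.
move: ha1 ha2 hc1 hc2 hx1 hx2 hy1 hy2; rewrite /qa /qc /qx /qy.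
case: q {hq Ha Hc Hx Hy} => [[[a x] y] c] /= *.
congr (_, _, _, _); lia.
Qed.

Section Omega.
Variable C : numClosedFieldType.
Variables (w : C) (t n : int).
Hypothesis Hc : w^* = t%:~R - w.
Hypothesis Hs : w ^+ 2 = t%:~R * w - n%:~R.

Definition bq (q : qt) : C := (qx q)%:~R + (qy q)%:~R * w.
Definition Qf (X Y : C) (q : qt) : C :=
  (qa q)%:~R * X * Y + bq q * X + (bq q)^* * Y + (qc q)%:~R.

Lemma conj_int (m : int) : (m%:~R : C)^* = m%:~R.
Proof. by rewrite rmorph_int. Qed.

Lemma bq_conj q : (bq q)^* = (qx q + t * qy q)%:~R - (qy q)%:~R * w.
Proof. rewrite /bq rmorphD rmorphM !rmorph_int /= Hc intrD intrM; ring. Qed.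

Lemma bq_norm q : bq q * (bq q)^* = (Nf t n (qx q) (qy q))%:~R.
Proof. rewrite bq_conj /bq /Nf !intrD !intrM; ring: Hs. Qed.

End Omega.

Definition td (d : nat) : int := if (d %% 4 == 3)%N then 1 else 0.
Definition nd (d : nat) : int := if (d %% 4 == 3)%N then (d %/ 4)%:Z + 1 else d%:Z.

Lemma dlist d : d \in [:: 1; 2; 3; 7; 11]%N ->
  (d = 1 \/ d = 2 \/ d = 3 \/ d = 7 \/ d = 11)%N.
Proof.
rewrite !inE => /orP[/eqP->|/orP[/eqP->|/orP[/eqP->|/orP[/eqP->|/eqP->]]]]; tauto.
Qed.

Lemma td_nd d : d \in [:: 1; 2; 3; 7; 11]%N -> (td d = 0 \/ td d = 1) /\ 1 <= nd d.
Proof. by case/dlist => [|[|[|[|]]]] ->; rewrite /td /nd /=; split; auto. Qed.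

Lemma intr_posz (R : pzRingType) (m : nat) : ((m%:Z)%:~R : R) = m%:R.
Proof. by []. Qed.

Lemma omega_facts (C : numClosedFieldType) d : d \in [:: 1; 2; 3; 7; 11]%N ->
  (omega_d C d)^* = (td d)%:~R - omega_d C d /\
  omega_d C d ^+ 2 = (td d)%:~R * omega_d C d - (nd d)%:~R.
Proof.
move=> hd.
have hs : (sqrtC (d%:R : C))^* = sqrtC (d%:R) by rewrite geC0_conj // sqrtC_ge0 ler0n.
have hm : (sqrtm C d)^* = - sqrtm C d.
  by rewrite /sqrtm rmorphM /= hs conjCi mulNr.
have hm2 : sqrtm C d ^+ 2 = - d%:R.
  by rewrite /sqrtm exprMn sqrCi sqrtCK mulN1r.
have h2 : (2 : C)^* = 2 by rewrite rmorph_nat.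
have h2' : (2 : C) != 0 by rewrite pnatr_eq0.
move: hm hm2; rewrite /omega_d /td /nd.
case/dlist: hd => [|[|[|[|]]]] -> /= hm hm2.
- split; first by rewrite hm; ring.
  by rewrite hm2; ring.
- split; first by rewrite hm; ring.
  by rewrite hm2; ring.
- split; first by rewrite fmorph_div rmorphD /= rmorph1 hm h2; field.
  by rewrite (_ : (3 %/ 4)%N = 0%N) // intrD !intr_posz; field: hm2.
- split; first by rewrite fmorph_div rmorphD /= rmorph1 hm h2; field.
  by rewrite (_ : (7 %/ 4)%N = 1%N) // intrD !intr_posz; field: hm2.
- split; first by rewrite fmorph_div rmorphD /= rmorph1 hm h2; field.
  by rewrite (_ : (11 %/ 4)%N = 2%N) // intrD !intr_posz; field: hm2.
Qed.

Lemma ev_Pk (C : numClosedFieldType) d D k X Y : d \in [:: 1; 2; 3; 7; 11]%N ->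
  ev (Pk C d D k) X Y =
  \sum_(q <- Sseq (td d) (nd d) D) (Qf (omega_d C d) X Y q) ^+ k.
Proof.
move=> hd; have [Hc Hs] := omega_facts C hd.
rewrite /Sseq big_filter big_map big_mkcond /Pk !pair_bigA ev_sum /=.
apply: eq_bigr => i _.
set b := (_ + _ * omega_d C d).
have hb : b * b^* = (Nf (td d) (nd d) (qx (enc i)) (qy (enc i)))%:~R.
  exact: (bq_norm Hc Hs (enc i)).
have -> : [&& - (i.1.1.2 : nat)%:Z < 0, 0 < (i.1.1.1 : nat)%:Z
   & b * b^* - ((i.1.1.1 : nat)%:Z)%:~R * (- (i.1.1.2 : nat)%:Z)%:~R == D%:R]
   = inS (td d) (nd d) D (enc i).
  rewrite /inS hb -intrM -intrB -intr_posz eqr_int.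
  by [].
case: ifP => _; last by rewrite ev0.
by rewrite evX !evD !evM !ev_cst ev_Zv ev_Wv.
Qed.

Lemma reindex_seq (T : eqType) (V : nmodType) (s : seq T) (p q : pred T)
    (f g : T -> T) (G : T -> V) :
  uniq s ->
  (forall x, x \in s -> p x -> [/\ f x \in s, q (f x) & g (f x) = x]) ->
  (forall x, x \in s -> q x -> [/\ g x \in s, p (g x) & f (g x) = x]) ->
  \sum_(x <- s | p x) G (f x) = \sum_(x <- s | q x) G x.
Proof.
move=> us hf hg.
rewrite -big_filter -[RHS]big_filter -(big_map f xpredT G).
apply: perm_big; apply: uniq_perm.
- rewrite map_inj_in_uniq ?filter_uniq // => x y.
  rewrite !mem_filter => /andP[px xs] /andP[py ys] e.
  have [_ _ <-] := hf x xs px; have [_ _ <-] := hf y ys py.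
  by rewrite e.
- by rewrite filter_uniq.
move=> y; apply/mapP/idP.
  move=> [x]; rewrite mem_filter => /andP[px xs] ->.
  by have [h1 h2 _] := hf x xs px; rewrite mem_filter h1 h2.
rewrite mem_filter => /andP[qy ys].
have [h1 h2 h3] := hg y ys qy.
by exists (g y); rewrite ?mem_filter ?h1 ?h2 ?h3.
Qed.

Definition negq (q : qt) : qt := (- qa q, - qx q, - qy q, - qc q).

Section Comb.
Variables (t n : int) (D : nat).
Hypothesis ht : t = 0 \/ t = 1.
Hypothesis hn : 1 <= n.
Hypothesis hNN : forall x y, Nf t n x y != D%:Z.

Local Notation S := (Sseq t n D).

Lemma reindexS (p q : pred qt) (f g : qt -> qt) (V : nmodType) (G : qt -> V) :
  (forall x, inS t n D x -> p x -> [/\ inS t n D (f x), q (f x) & g (f x) = x]) ->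
  (forall x, inS t n D x -> q x -> [/\ inS t n D (g x), p (g x) & f (g x) = x]) ->
  \sum_(x <- S | p x) G (f x) = \sum_(x <- S | q x) G x.
Proof.
move=> hf hg; apply: (reindex_seq (g := g)); first exact: Sseq_uniq.
- move=> x; rewrite !(@memS t n D _ ht hn) => xs px.
  have [h1 h2 h3] := hf x xs px.
  by split.
- move=> x; rewrite !(@memS t n D _ ht hn) => xs px.
  have [h1 h2 h3] := hg x xs px.
  by split.
Qed.

Lemma disc_nz a x y c : Nf t n x y - a * c = D%:Z -> a != 0 /\ c != 0.
Proof.
move=> h; split; apply/negP => /eqP e; move: h; rewrite e ?mul0r ?mulr0 subr0 => h;
  by move: (hNN x y); rewrite h eqxx.
Qed.

Definition sig1 (q : qt) : qt := (qa q, qx q + t * qy q, - qy q, qc q).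

Lemma comb1 (V : nmodType) (G : qt -> V) :
  \sum_(q <- S) G (sig1 q) = \sum_(q <- S) G q.
Proof.
apply: (reindexS (p := xpredT) (q := xpredT) (g := sig1)).
- move=> [[[a x] y] c]; rewrite /inS /sig1 /qa /qx /qy /qc /= => /and3P[h1 h2 /eqP h3] _.
  split => //; last by congr (_, _, _, _); ring.
  by rewrite h1 h2 -h3 /Nf /=; apply/eqP; ring.
- move=> [[[a x] y] c]; rewrite /inS /sig1 /qa /qx /qy /qc /= => /and3P[h1 h2 /eqP h3] _.
  split => //; last by congr (_, _, _, _); ring.
  by rewrite h1 h2 -h3 /Nf /=; apply/eqP; ring.
Qed.


Definition qmul (u1 u2 : int) (q : qt) : qt :=
  (qa q, qx q * u1 - n * qy q * u2, qx q * u2 + qy q * u1 + t * qy q * u2, qc q).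

Lemma Nf_mul x y u1 u2 :
  Nf t n (x * u1 - n * y * u2) (x * u2 + y * u1 + t * y * u2) = Nf t n x y * Nf t n u1 u2.
Proof. rewrite /Nf; ring. Qed.

Lemma qmulK u1 u2 q : Nf t n u1 u2 = 1 -> qmul (u1 + t * u2) (- u2) (qmul u1 u2 q) = q.
Proof.
move=> hu; case: q => [[[a x] y] c]; rewrite /qmul /qa /qx /qy /qc /=.
congr (_, _, _, _).
  by transitivity (x * Nf t n u1 u2); [rewrite /Nf; ring | rewrite hu mulr1].
by transitivity (y * Nf t n u1 u2); [rewrite /Nf; ring | rewrite hu mulr1].
Qed.

Lemma comb2 (V : nmodType) (G : qt -> V) u1 u2 : Nf t n u1 u2 = 1 ->
  \sum_(q <- S) G (qmul u1 u2 q) = \sum_(q <- S) G q.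
Proof.
move=> hu.
have hu' : Nf t n (u1 + t * u2) (- u2) = 1 by rewrite -hu /Nf; ring.
apply: (reindexS (p := xpredT) (q := xpredT) (g := qmul (u1 + t * u2) (- u2))).
- move=> q hq _; split => //; last exact: qmulK.
  move: hq; case: q => [[[a x] y] c]; rewrite /inS /qmul /qa /qx /qy /qc /= => /and3P[h1 h2 /eqP h3].
  by rewrite h1 h2 Nf_mul hu mulr1 h3 eqxx.
- move=> q hq _; split => //; last first.
    have := @qmulK (u1 + t * u2) (- u2) q hu'.
    by rewrite (_ : u1 + t * u2 + t * - u2 = u1) ?opprK //; ring.
  move: hq; case: q => [[[a x] y] c]; rewrite /inS /qmul /qa /qx /qy /qc /= => /and3P[h1 h2 /eqP h3].
  by rewrite h1 h2 Nf_mul hu' mulr1 h3 eqxx.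
Qed.

Definition sig3 (q : qt) : qt := (- qc q, qx q + t * qy q, - qy q, - qa q).

Lemma comb3 (V : zmodType) (G : qt -> V) : (forall q, G (negq q) = - G q) ->
  \sum_(q <- S) G q + \sum_(q <- S) G (negq (sig3 q)) = 0.
Proof.
move=> GN; under [X in _ + X]eq_bigr => q _ do rewrite GN.
rewrite sumrN.
rewrite (reindexS (p := xpredT) (q := xpredT) (f := sig3) (g := sig3)) ?subrr //.
- move=> [[[a x] y] c]; rewrite /inS /sig3 /qa /qx /qy /qc /= => /and3P[h1 h2 /eqP h3] _.
  split => //; last by congr (_, _, _, _); ring.
  apply/and3P; split; [lia | lia | apply/eqP; rewrite -h3 /Nf; ring].
- move=> [[[a x] y] c]; rewrite /inS /sig3 /qa /qx /qy /qc /= => /and3P[h1 h2 /eqP h3] _.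
  split => //; last by congr (_, _, _, _); ring.
  apply/and3P; split; [lia | lia | apply/eqP; rewrite -h3 /Nf; ring].
Qed.

Definition Bm (q : qt) : qt :=
  (qa q, qx q + qa q, qy q, qa q + (2 * qx q + t * qy q) + qc q).
Definition Am (q : qt) : qt :=
  (qa q + (2 * qx q + t * qy q) + qc q, qx q + t * qy q + qa q, - qy q, qa q).
Definition Binv (q : qt) : qt :=
  (qa q, qx q - qa q, qy q, qa q - (2 * qx q + t * qy q) + qc q).
Definition nAinv (q : qt) : qt :=
  (- qc q, qc q - (qx q + t * qy q), qy q, - qa q + (2 * qx q + t * qy q) - qc q).
Definition sig4 (q : qt) : qt :=
  (qa q + (2 * qx q + t * qy q) + qc q, - qx q - qc q, - qy q, qc q).
Definition qv (q : qt) := qa q + (2 * qx q + t * qy q) + qc q.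
Definition rv (q : qt) := qa q - (2 * qx q + t * qy q) + qc q.

Lemma qv_nz q : inS t n D q -> qv q != 0.
Proof.
case: q => [[[a x] y] c]; rewrite /inS /qv /qa /qx /qy /qc /= => /and3P[h1 h2 /eqP h3].
have [] := @disc_nz a (x + a) y (a + (2 * x + t * y) + c) => //.
by rewrite -h3 /Nf; ring.
Qed.

Lemma rv_nz q : inS t n D q -> rv q != 0.
Proof.
case: q => [[[a x] y] c]; rewrite /inS /rv /qa /qx /qy /qc /= => /and3P[h1 h2 /eqP h3].
have [] := @disc_nz a (x - a) y (a - (2 * x + t * y) + c) => //.
by rewrite -h3 /Nf; ring.
Qed.

Lemma comb4 (V : zmodType) (G : qt -> V) : (forall q, G (negq q) = - G q) ->
  \sum_(q <- S) G q + \sum_(q <- S) G (Am q) - \sum_(q <- S) G (Bm q) = 0.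
Proof.
move=> GN.
rewrite [X in X + _ - _](bigID (fun q => rv q < 0)) /=.
rewrite [X in _ + X - _](bigID (fun q => qv q < 0)) /=.
rewrite [X in _ + _ - X](bigID (fun q => qv q < 0)) /=.
have e1 : \sum_(q <- S | qv q < 0) G (Bm q) = \sum_(q <- S | rv q < 0) G q.
  apply: (reindexS (g := Binv)).
  - move=> q hq hp; have := qv_nz hq; move: hq hp.
    case: q => [[[a x] y] c]; rewrite /inS /qv /rv /Bm /Binv /qa /qx /qy /qc /= => /and3P[h1 h2 /eqP h3] hp hnz.
    split; last by congr (_, _, _, _); ring.
      apply/and3P; split; [lia | lia | apply/eqP; rewrite -h3 /Nf; ring].
    lia.
  - move=> q hq hp; have := rv_nz hq; move: hq hp.
    case: q => [[[a x] y] c]; rewrite /inS /qv /rv /Bm /Binv /qa /qx /qy /qc /= => /and3P[h1 h2 /eqP h3] hp hnz.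
    split; last by congr (_, _, _, _); ring.
      apply/and3P; split; [lia | lia | apply/eqP; rewrite -h3 /Nf; ring].
    lia.
have e2 : \sum_(q <- S | qv q < 0) G (Am q) = - \sum_(q <- S | ~~ (rv q < 0)) G q.
  rewrite -sumrN.
  have -> : \sum_(q <- S | qv q < 0) G (Am q) = \sum_(q <- S | qv q < 0) - G (negq (Am q)).
    by apply: eq_bigr => q _; rewrite GN opprK.
  apply: (reindexS (f := fun q => negq (Am q)) (g := nAinv) (fun q => - G q)).
  - move=> q hq hp; have := qv_nz hq; move: hq hp.
    case: q => [[[a x] y] c]; rewrite /inS /qv /rv /Am /negq /nAinv /qa /qx /qy /qc /= => /and3P[h1 h2 /eqP h3] hp hnz.
    split; last by congr (_, _, _, _); ring.
      apply/and3P; split; [lia | lia | apply/eqP; rewrite -h3 /Nf; ring].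
    lia.
  - move=> q hq hp; have := rv_nz hq; move: hq hp.
    case: q => [[[a x] y] c]; rewrite /inS /qv /rv /Am /negq /nAinv /qa /qx /qy /qc /= => /and3P[h1 h2 /eqP h3] hp hnz.
    split; last by congr (_, _, _, _); ring.
      apply/and3P; split; [lia | lia | apply/eqP; rewrite -h3 /Nf; ring].
    lia.
have e3 : \sum_(q <- S | ~~ (qv q < 0)) G (Bm q) = \sum_(q <- S | ~~ (qv q < 0)) G (Am q).
  have -> : \sum_(q <- S | ~~ (qv q < 0)) G (Bm q) = \sum_(q <- S | ~~ (qv q < 0)) G (Am (sig4 q)).
    apply: eq_bigr => q _; congr G.
    by case: q => [[[a x] y] c]; rewrite /Am /Bm /sig4 /qa /qx /qy /qc /=; congr (_, _, _, _); ring.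
  apply: (reindexS (f := sig4) (g := sig4) (fun q => G (Am q))).
  - move=> q hq hp; have := qv_nz hq; move: hq hp.
    case: q => [[[a x] y] c]; rewrite /inS /qv /sig4 /qa /qx /qy /qc /= => /and3P[h1 h2 /eqP h3] hp hnz.
    split; last by congr (_, _, _, _); ring.
      apply/and3P; split; [lia | lia | apply/eqP; rewrite -h3 /Nf; ring].
    lia.
  - move=> q hq hp; have := qv_nz hq; move: hq hp.
    case: q => [[[a x] y] c]; rewrite /inS /qv /sig4 /qa /qx /qy /qc /= => /and3P[h1 h2 /eqP h3] hp hnz.
    split; last by congr (_, _, _, _); ring.
      apply/and3P; split; [lia | lia | apply/eqP; rewrite -h3 /Nf; ring].
    lia.
rewrite e1 e2 e3.
by apply/eqP; rewrite subr_eq0; apply/eqP; rewrite addrA addrK.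
Qed.

End Comb.

Section Comb5.
Variable D : nat.
Hypothesis hNN : forall x y, Nf 1 2 x y != D%:Z.
Local Notation S := (Sseq 1 2 D).

Definition E1 (q : qt) : qt :=
  (qa q, qx q + qa q, qy q - qa q, 2 * qa q + qx q - 3 * qy q + qc q).
Definition E3 (q : qt) : qt :=
  (qa q + qx q - 3 * qy q + 2 * qc q, qx q + qc q, qy q - qc q, qc q).
Definition E4 (q : qt) : qt :=
  (2 * qa q + qx q + 4 * qy q + qc q, qa q + 3 * qy q + qc q,
   - qa q - qx q - 3 * qy q - qc q, qa q + qx q + 4 * qy q + 2 * qc q).
Definition E1inv (q : qt) : qt :=
  (qa q, qx q - qa q, qy q + qa q, 2 * qa q - qx q + 3 * qy q + qc q).
Definition E3inv (q : qt) : qt :=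
  (qa q - qx q + 3 * qy q + 2 * qc q, qx q - qc q, qy q + qc q, qc q).
Definition E4inv (q : qt) : qt :=
  (2 * qa q - qx q + 3 * qy q + qc q, - qx q - qy q,
   - qa q + qx q - 2 * qy q - qc q, qa q - qx q + 3 * qy q + 2 * qc q).
Definition sd (q : qt) : qt := (- qc q, qx q + qy q, - qy q + qc q, - qa q - qx q + 3 * qy q - 2 * qc q).
Definition sdinv (q : qt) : qt := (- 2 * qa q - qx q - 4 * qy q - qc q, qa q + qx q + qy q, - qa q - qy q, - qa q).
Definition se (q : qt) : qt :=
  (- qa q - qx q + 3 * qy q - 2 * qc q, qa q - 3 * qy q + qc q,
   - qa q - qx q + 2 * qy q - qc q, - 2 * qa q - qx q + 3 * qy q - qc q).
Definition sf (q : qt) : qt := (- qc q, qx q + qy q + qc q, - qy q - qc q, - qa q - qx q - 4 * qy q - 2 * qc q).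
Definition sfinv (q : qt) : qt := (- 2 * qa q - qx q + 3 * qy q - qc q, qx q + qy q, qa q - qy q, - qa q).

Definition s1 q := 2 * qa q + qx q - 3 * qy q + qc q.
Definition vv q := qa q + qx q - 3 * qy q + 2 * qc q.
Definition s2 q := 2 * qa q + qx q + 4 * qy q + qc q.
Definition vp q := qa q + qx q + 4 * qy q + 2 * qc q.
Definition kA q := 2 * qa q - qx q + 3 * qy q + qc q.
Definition kB q := qa q - qx q + 3 * qy q + 2 * qc q.

Lemma dnz a x y c : Nf 1 2 x y - a * c = D%:Z -> a != 0 /\ c != 0.
Proof.
move=> h; split; apply/negP => /eqP e; move: h; rewrite e ?mul0r ?mulr0 subr0 => h;
  by move: (hNN x y); rewrite h eqxx.
Qed.

Lemma nz5 q : inS 1 2 D q ->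
  [/\ s1 q != 0, vv q != 0, s2 q != 0 & vp q != 0] /\ (kA q != 0 /\ kB q != 0).
Proof.
case: q => [[[a x] y] c]; rewrite /inS /s1 /vv /s2 /vp /kA /kB /qa /qx /qy /qc /=.
move=> /and3P[h1 h2 /eqP h3].
have [_ n1] := @dnz a (x + a) (y - a) (2 * a + x - 3 * y + c) ltac:(rewrite -h3 /Nf; ring).
have [n2 _] := @dnz (a + x - 3 * y + 2 * c) (x + c) (y - c) c ltac:(rewrite -h3 /Nf; ring).
have [n3 n4] := @dnz (2 * a + x + 4 * y + c) (a + 3 * y + c) (- a - x - 3 * y - c)
   (a + x + 4 * y + 2 * c) ltac:(rewrite -h3 /Nf; ring).
have [_ n5] := @dnz a (x - a) (y + a) (2 * a - x + 3 * y + c) ltac:(rewrite -h3 /Nf; ring).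
have [n6 _] := @dnz (a - x + 3 * y + 2 * c) (x - c) (y + c) c ltac:(rewrite -h3 /Nf; ring).
by do !split.
Qed.

Ltac side5 :=
  let q := fresh "q" in let hq := fresh "hq" in let hp := fresh "hp" in
  move=> q hq hp; have := nz5 hq; move: hq hp;
  case: q => [[[? ?] ?] ?];
  rewrite /inS /s1 /vv /s2 /vp /kA /kB /E1 /E3 /E4 /E1inv /E3inv /E4inv /sd /sdinv /se /sf /sfinv
    /qa /qx /qy /qc /=;
  let h3 := fresh "h3" in
  move=> /and3P[? ? /eqP h3] ? [[? ? ? ?] [? ?]];
  split; [apply/and3P; split; [lia | lia | apply/eqP; rewrite -h3 /Nf; ring]
         | lia | congr (_, _, _, _); ring].

Lemma ht1 : (1 : int) = 0 \/ (1 : int) = 1. Proof. by right. Qed.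
Lemma hn2 : (1 : int) <= 2. Proof. by []. Qed.

Lemma reindex5 (p q : pred qt) (f g : qt -> qt) (V : nmodType) (G : qt -> V) :
  (forall x, inS 1 2 D x -> p x -> [/\ inS 1 2 D (f x), q (f x) & g (f x) = x]) ->
  (forall x, inS 1 2 D x -> q x -> [/\ inS 1 2 D (g x), p (g x) & f (g x) = x]) ->
  \sum_(x <- S | p x) G (f x) = \sum_(x <- S | q x) G x.
Proof. exact: (reindexS ht1 hn2). Qed.

Lemma comb5a (V : nmodType) (G : qt -> V) :
  \sum_(q <- S | s1 q < 0) G (E1 q) = \sum_(q <- S | kA q < 0) G q.
Proof. apply: (reindex5 (g := E1inv)); side5. Qed.

Lemma comb5b (V : nmodType) (G : qt -> V) :
  \sum_(q <- S | 0 < vv q) G (E3 q) = \sum_(q <- S | ~~ (kA q < 0) && (0 < kB q)) G q.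
Proof. apply: (reindex5 (g := E3inv)); side5. Qed.

Lemma comb5c (V : nmodType) (G : qt -> V) :
  \sum_(q <- S | (0 < s2 q) && (vp q < 0)) G (E4 q) =
  \sum_(q <- S | ~~ (kA q < 0) && ~~ (0 < kB q)) G q.
Proof. apply: (reindex5 (g := E4inv)); side5. Qed.

Lemma comb5d (V : zmodType) (G : qt -> V) : (forall q, G (negq q) = - G q) ->
  \sum_(q <- S | ~~ (s1 q < 0) && (0 < vv q)) G (E1 q) =
  - \sum_(q <- S | ~~ (0 < s2 q)) G (E4 q).
Proof.
move=> GN; rewrite -sumrN.
have -> : \sum_(q <- S | ~~ (s1 q < 0) && (0 < vv q)) G (E1 q) =
          \sum_(q <- S | ~~ (s1 q < 0) && (0 < vv q)) - G (E4 (sd q)).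
  apply: eq_bigr => q _; rewrite -GN; congr G.
  by case: q => [[[a x] y] c]; rewrite /E1 /E4 /sd /negq /qa /qx /qy /qc /=; congr (_, _, _, _); ring.
apply: (reindex5 (g := sdinv) (fun q => - G (E4 q))); side5.
Qed.

Lemma comb5e (V : zmodType) (G : qt -> V) : (forall q, G (negq q) = - G q) ->
  \sum_(q <- S | ~~ (s1 q < 0) && ~~ (0 < vv q)) G (E1 q) =
  - \sum_(q <- S | ~~ (0 < vv q) && (0 < s1 q)) G (E3 q).
Proof.
move=> GN; rewrite -sumrN.
have -> : \sum_(q <- S | ~~ (s1 q < 0) && ~~ (0 < vv q)) G (E1 q) =
          \sum_(q <- S | ~~ (s1 q < 0) && ~~ (0 < vv q)) - G (E3 (se q)).
  apply: eq_bigr => q _; rewrite -GN; congr G.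
  by case: q => [[[a x] y] c]; rewrite /E1 /E3 /se /negq /qa /qx /qy /qc /=; congr (_, _, _, _); ring.
apply: (reindex5 (g := se) (fun q => - G (E3 q))); side5.
Qed.

Lemma comb5f (V : zmodType) (G : qt -> V) : (forall q, G (negq q) = - G q) ->
  \sum_(q <- S | (0 < s2 q) && ~~ (vp q < 0)) G (E4 q) =
  - \sum_(q <- S | ~~ (0 < vv q) && ~~ (0 < s1 q)) G (E3 q).
Proof.
move=> GN; rewrite -sumrN.
have -> : \sum_(q <- S | (0 < s2 q) && ~~ (vp q < 0)) G (E4 q) =
          \sum_(q <- S | (0 < s2 q) && ~~ (vp q < 0)) - G (E3 (sf q)).
  apply: eq_bigr => q _; rewrite -GN; congr G.
  by case: q => [[[a x] y] c]; rewrite /E4 /E3 /sf /negq /qa /qx /qy /qc /=; congr (_, _, _, _); ring.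
apply: (reindex5 (g := sfinv) (fun q => - G (E3 q))); side5.
Qed.

Lemma comb5 (V : comNzRingType) (G : qt -> V) : (forall q, G (negq q) = - G q) ->
  \sum_(q <- S) G q - \sum_(q <- S) G (E1 q) - \sum_(q <- S) G (E3 q)
  - \sum_(q <- S) G (E4 q) = 0.
Proof.
move=> GN.
have sq : \sum_(q <- S) G q = \sum_(q <- S | kA q < 0) G q +
   (\sum_(q <- S | ~~ (kA q < 0) && (0 < kB q)) G q
    + \sum_(q <- S | ~~ (kA q < 0) && ~~ (0 < kB q)) G q).
  by rewrite (bigID (fun q => kA q < 0)) /= [X in _ + X = _](bigID (fun q => 0 < kB q)) /=.
have s1e : \sum_(q <- S) G (E1 q) = \sum_(q <- S | s1 q < 0) G (E1 q) +
   (\sum_(q <- S | ~~ (s1 q < 0) && (0 < vv q)) G (E1 q)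
    + \sum_(q <- S | ~~ (s1 q < 0) && ~~ (0 < vv q)) G (E1 q)).
  by rewrite (bigID (fun q => s1 q < 0)) /= [X in _ + X = _](bigID (fun q => 0 < vv q)) /=.
have s3e : \sum_(q <- S) G (E3 q) = \sum_(q <- S | 0 < vv q) G (E3 q) +
   (\sum_(q <- S | ~~ (0 < vv q) && (0 < s1 q)) G (E3 q)
    + \sum_(q <- S | ~~ (0 < vv q) && ~~ (0 < s1 q)) G (E3 q)).
  by rewrite (bigID (fun q => 0 < vv q)) /= [X in _ + X = _](bigID (fun q => 0 < s1 q)) /=.
have s4e : \sum_(q <- S) G (E4 q) =
   (\sum_(q <- S | (0 < s2 q) && (vp q < 0)) G (E4 q)
    + \sum_(q <- S | (0 < s2 q) && ~~ (vp q < 0)) G (E4 q))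
   + \sum_(q <- S | ~~ (0 < s2 q)) G (E4 q).
  by rewrite (bigID (fun q => 0 < s2 q)) /= [X in X + _ = _](bigID (fun q => vp q < 0)) /=.
rewrite sq s1e s3e s4e comb5a comb5b comb5c (comb5d GN) (comb5e GN) (comb5f GN).
set A := \sum_(q <- S | kA q < 0) G q.
set B := \sum_(q <- S | ~~ (kA q < 0) && (0 < kB q)) G q.
set Cc := \sum_(q <- S | ~~ (kA q < 0) && ~~ (0 < kB q)) G q.
set Z := \sum_(q <- S | ~~ (0 < s2 q)) G (E4 q).
set Y := \sum_(q <- S | ~~ (0 < vv q) && (0 < s1 q)) G (E3 q).
set W := \sum_(q <- S | ~~ (0 < vv q) && ~~ (0 < s1 q)) G (E3 q).
ring.
Qed.

End Comb5.

Section Mx.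
Variable C : numClosedFieldType.

Lemma mx2E (a b c e : C) :
  [/\ mx2 a b c e ord0 ord0 = a, mx2 a b c e ord0 ord_max = b,
      mx2 a b c e ord_max ord0 = c & mx2 a b c e ord_max ord_max = e].
Proof. by rewrite /mx2 !mxE. Qed.

Lemma mx2_eq (A : 'M[C]_2) :
  A = mx2 (A ord0 ord0) (A ord0 ord_max) (A ord_max ord0) (A ord_max ord_max).
Proof.
apply/matrixP => i j; rewrite /mx2 mxE.
case: i => [[|[|i]] hi] //; case: j => [[|[|j]] hj] //=;
  by congr (A _ _); apply: val_inj.
Qed.

Lemma mx2_1 : (1%:M : 'M[C]_2) = mx2 1 0 0 1.
Proof. by rewrite [LHS]mx2_eq !mxE. Qed.

Lemma mx2_mul (a b c e a' b' c' e' : C) :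
  mx2 a b c e *m mx2 a' b' c' e' =
  mx2 (a * a' + b * c') (a * b' + b * e') (c * a' + e * c') (c * b' + e * e').
Proof.
rewrite [LHS]mx2_eq !mxE !big_ord_recr !big_ord0 /=.
by rewrite /mx2 !mxE /= !add0r.
Qed.

Lemma mx2_inv (a b c e a' b' c' e' : C) :
  mx2 a b c e *m mx2 a' b' c' e' = 1%:M ->
  invmx (mx2 a b c e) = mx2 a' b' c' e'.
Proof.
move=> h; have [hu _] := mulmx1_unit h.
by rewrite -[RHS](mulKmx hu) h mulmx1.
Qed.

Definition lin (c e : C) : {poly C} := c *: 'X + e%:P.
Lemma lin_ev c e z : (lin c e).[z] = c * z + e.
Proof. by rewrite /lin hornerD hornerZ hornerX hornerC. Qed.
Lemma lin_neq0 c e : (c != 0) || (e != 0) -> lin c e != 0.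
Proof.
move=> h; apply/eqP => h0.
have h1 := lin_ev c e 0; have h2 := lin_ev c e 1.
rewrite h0 horner0 mulr0 add0r in h1; rewrite h0 horner0 mulr1 -h1 addr0 in h2.
by move: h; rewrite -h1 -h2 eqxx.
Qed.

End Mx.

Section Trans.
Variable C : numClosedFieldType.
Variables (om : C) (t n : int).
Hypothesis Hc : om^* = t%:~R - om.
Hypothesis Hs : om ^+ 2 = t%:~R * om - n%:~R.

Ltac trans_tac :=
  rewrite /Qf !(bq_conj Hc) /bq /negq /sig1 /sig3 /Am /Bm /mulq /qa /qx /qy /qc /=;
  rewrite ?(rmorph0, rmorph1, rmorphN, rmorphD, rmorphB, rmorphM) /= ?Hc.

Lemma tr_id z w q :
  (0 * z + 1) * (0^* * w + 1^*) * Qf om ((1 * z + 0) / (0 * z + 1)) ((1^* * w + 0^*) / (0^* * w + 1^*)) q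
  = Qf om z w q.
Proof. trans_tac. by field. Qed.

Lemma tr_S z w q : z != 0 -> w != 0 ->
  (1 * z + 0) * (1^* * w + 0^*) * Qf om ((0 * z + -1) / (1 * z + 0)) ((0^* * w + (-1)^*) / (1^* * w + 0^*)) q
  = Qf om z w (negq (sig3 t q)).
Proof. move=> hz hw; trans_tac. by field; rewrite hz hw. Qed.

Lemma tr_TSe z w q : z != 0 -> w != 0 ->
  (-1 * z + 0) * ((-1)^* * w + 0^*) *
  Qf om ((-1 * z + -1) / (-1 * z + 0)) (((-1)^* * w + (-1)^*) / ((-1)^* * w + 0^*)) q
  = Qf om z w (Am t q).
Proof. move=> hz hw; trans_tac. by field; rewrite hz hw. Qed.

Lemma tr_T z w q :
  (0 * z + 1) * (0^* * w + 1^*) * Qf om ((1 * z + 1) / (0 * z + 1)) ((1^* * w + 1^*) / (0^* * w + 1^*)) q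
  = Qf om z w (Bm t q).
Proof. trans_tac. by field. Qed.

End Trans.

Section Trans5.
Variable C : numClosedFieldType.
Variables (om : C).
Hypothesis Hc : om^* = 1%:~R - om.
Hypothesis Hs : om ^+ 2 = 1%:~R * om - 2%:~R.

Ltac trans_tac :=
  rewrite /Qf !(bq_conj Hc) /bq /E1 /E3 /E4 /qa /qx /qy /qc /=;
  rewrite ?(rmorph0, rmorph1, rmorphN, rmorphD, rmorphB, rmorphM) /= ?Hc.

Lemma tr_Tw z w q :
  (0 * z + 1) * (0^* * w + 1^*) * Qf om ((1 * z + om) / (0 * z + 1)) ((1^* * w + om^*) / (0^* * w + 1^*)) q
  = Qf om z w (E1 q).
Proof. trans_tac. by field: Hs. Qed.

Lemma tr_M3 z w q : (om - 1) * z + -1 != 0 -> (om - 1)^* * w + (-1)^* != 0 ->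
  ((om - 1) * z + -1) * ((om - 1)^* * w + (-1)^*) *
  Qf om ((-1 * z + 0) / ((om - 1) * z + -1)) (((-1)^* * w + 0^*) / ((om - 1)^* * w + (-1)^*)) q
  = Qf om z w (E3 q).
Proof.
move=> h1 h2; move: h2; rewrite ?(rmorph0, rmorph1, rmorphN, rmorphD, rmorphB, rmorphM) /= ?Hc => h2.
trans_tac. by field: Hs; rewrite h1 h2.
Qed.

Lemma tr_M4 z w q : 1 * z + om != 0 -> 1^* * w + om^* != 0 ->
  (1 * z + om) * (1^* * w + om^*) *
  Qf om (((1 - om) * z + 1) / (1 * z + om)) (((1 - om)^* * w + 1^*) / (1^* * w + om^*)) q
  = Qf om z w (E4 q).
Proof.
move=> h1 h2; move: h2; rewrite ?(rmorph0, rmorph1, rmorphN, rmorphD, rmorphB, rmorphM) /= ?Hc => h2.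
trans_tac. by field: Hs; rewrite -(mul1r z) -(mul1r w) h1 h2.
Qed.

End Trans5.

Section Main.
Variables (C : numClosedFieldType) (d D k : nat).
Hypothesis hd : d \in [:: 1; 2; 3; 7; 11]%N.
Hypothesis hk : odd k.
Local Notation om := (omega_d C d).
Local Notation S := (Sseq (td d) (nd d) D).

Lemma Hc : om^* = (td d)%:~R - om. Proof. by have [] := omega_facts C hd. Qed.
Lemma Hs : om ^+ 2 = (td d)%:~R * om - (nd d)%:~R. Proof. by have [] := omega_facts C hd. Qed.
Lemma htd : td d = 0 \/ td d = 1. Proof. by have [] := td_nd hd. Qed.
Lemma hnd : 1 <= nd d. Proof. by have [] := td_nd hd. Qed.

Lemma bideg_Pk : bideg k k (Pk C d D k).
Proof.
rewrite /Pk; do 4 (apply: bideg_sum => ? _); rewrite /=.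
case: ifP => _; last exact: bideg0.
by have := bidegX k (bideg_form _ _ _ _); rewrite mul1n; apply.
Qed.

Lemma oddX (x : C) : (- x) ^+ k = - x ^+ k.
Proof. by rewrite -mulN1r exprMn -signr_odd hk expr1 mulN1r. Qed.

Lemma GN z w q : (Qf om z w (negq q)) ^+ k = - (Qf om z w q) ^+ k.
Proof.
rewrite -oddX; congr (_ ^+ k).
rewrite /Qf !(bq_conj Hc) /bq /negq /qa /qx /qy /qc /=; ring.
Qed.

Lemma ev_slash_mx2 (a b c e : C) (E : qt -> qt) z w :
  c * z + e != 0 -> c^* * w + e^* != 0 ->
  (forall q, (c * z + e) * (c^* * w + e^*) *
     Qf om ((a * z + b) / (c * z + e)) ((a^* * w + b^*) / (c^* * w + e^*)) q
     = Qf om z w (E q)) ->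
  ev (slash k (Pk C d D k) (mx2 a b c e)) z w = \sum_(q <- S) (Qf om z w (E q)) ^+ k.
Proof.
move=> h1 h2 hE.
have [e1 e2 e3 e4] := mx2E a b c e.
have := @slash_ev C k (Pk C d D k) (mx2 a b c e) z w bideg_Pk.
rewrite /= e1 e2 e3 e4 => -> //.
rewrite ev_Pk // mulr_sumr; apply: eq_bigr => q _.
by rewrite -hE !exprMn.
Qed.

Lemma ev_slash_1 z w :
  ev (slash k (Pk C d D k) 1%:M) z w = \sum_(q <- S) (Qf om z w q) ^+ k.
Proof.
rewrite mx2_1 (ev_slash_mx2 (E := id)) //.
- by rewrite mul0r add0r oner_eq0.
- by rewrite rmorph0 rmorph1 mul0r add0r oner_eq0.
- by move=> q; rewrite (tr_id Hc).
Qed.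

Lemma hNN : ~ (exists beta : C, in_Od d beta /\ D%:R = beta * beta^*) ->
  forall x y, Nf (td d) (nd d) x y != D%:Z.
Proof.
move=> hnn x y; apply/negP => /eqP hN; apply: hnn.
exists (bq om (0, x, y, 0)); split; first by exists x, y.
by rewrite (bq_norm Hc Hs) /qx /qy /= hN.
Qed.

End Main.

Unset Implicit Arguments.

Theorem proposition2p8 (C : numClosedFieldType) (d Delta k : nat) :
  d \in [:: 1; 2; 3; 7; 11]%N ->
  (0 < Delta)%N ->
  ~ (exists beta : C, in_Od d beta /\ Delta%:R = beta * beta^*) ->
  odd k ->
  let P := Pk C d Delta k in
  [/\ eval2 P (Wv C) (Zv C) = P,
      (forall u : C, unit_Od d u ->
         eval2 P (cst u * Zv C) (cst u^* * Wv C) = P),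
      slash k P 1%:M + slash k P (mat_S C) = 0,
      slash k P 1%:M + slash k P (mat_T C *m mat_S C *m mat_eps C)
        - slash k P (mat_T C) = 0 &
      (d = 7%N ->
         let w : C := (1 + sqrtm C 7) / 2 in
         let Tw := mx2 1 w 0 1 in
         slash k P 1%:M - slash k P Tw
         - slash k P (mat_S C *m invmx (mat_T C) *m Tw *m mat_S C)
         - slash k P (mat_T C *m invmx Tw *m mat_S C *m Tw) = 0)].
Proof.
move=> hd hD hnn hk P.
have hN := hNN hd hnn.
have ht := htd hd; have hn := hnd hd.
have Hc' := @Hc C d hd; have Hs' := @Hs C d hd.
have GN' := @GN C d k hd hk.

split.
-
  apply/eqP; rewrite -subr_eq0; apply/eqP; apply: ev_all0 => z w.
  rewrite evB ev_eval2 ev_Wv ev_Zv /P !ev_Pk //.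
  rewrite -(comb1 Delta ht hn (fun q => (Qf (omega_d C d) z w q) ^+ k)) /=.
  rewrite -sumrB big1 // => q _; apply/eqP; rewrite subr_eq0; apply/eqP; congr (_ ^+ k).
  rewrite /Qf !(bq_conj Hc') /bq /sig1 /qa /qx /qy /qc /=; ring.
-
  move=> u [[u1 [u2 eu]] [v [[v1 [v2 ev']] huv]]].
  have hNu : Nf (td d) (nd d) u1 u2 * Nf (td d) (nd d) v1 v2 = 1.
    have h1 := bq_norm Hc' Hs' (0, u1, u2, 0).
    have h2 := bq_norm Hc' Hs' (0, v1, v2, 0).
    rewrite /bq /qx /qy /= -eu in h1; rewrite /bq /qx /qy /= -ev' in h2.
    apply/eqP; rewrite -(eqr_int C) intrM -h1 -h2.
    have -> : u * u^* * (v * v^*) = (u * v) * (u * v)^* by rewrite rmorphM /=; ring.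
    by rewrite huv rmorph1 mulr1.
  have hu1 : Nf (td d) (nd d) u1 u2 = 1.
    have := Nf_lb u1 u2 ht hn; have := Nf_lb v1 v2 ht hn.
    have := sqr_ge0i u1; have := sqr_ge0i u2; have := sqr_ge0i v1; have := sqr_ge0i v2.
    move: hNu; set a := Nf _ _ u1 u2; set b := Nf _ _ v1 v2 => hab h1 h2 h3 h4 h5 h6.
    have ha0 : 0 <= a by lia.
    have hb0 : 0 <= b by lia.
    have hbn : b != 0 by apply/eqP => e; move: hab; rewrite e mulr0.
    have han : a != 0 by apply/eqP => e; move: hab; rewrite e mul0r.
    have hb1 : 0 <= b - 1 by lia.
    have := mulr_ge0 ha0 hb1; lia.
  have huu : u * u^* = 1.
    have := bq_norm Hc' Hs' (0, u1, u2, 0); rewrite /bq /qx /qy /= -eu hu1 => ->.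
    by [].
  apply/eqP; rewrite -subr_eq0; apply/eqP; apply: ev_all0 => z w.
  rewrite evB ev_eval2 !evM !ev_cst ev_Wv ev_Zv /P !ev_Pk //.
  rewrite -[X in _ - X](comb2 Delta ht hn (fun q => (Qf (omega_d C d) z w q) ^+ k) hu1) /=.
  rewrite -sumrB big1 // => q _; apply/eqP; rewrite subr_eq0; apply/eqP; congr (_ ^+ k).
  have e1 : bq (omega_d C d) q * u = bq (omega_d C d) (qmul (td d) (nd d) u1 u2 q).
    by rewrite eu /bq /qmul /qa /qx /qy /qc /=; ring: Hs'.
  have e2 : (bq (omega_d C d) q)^* * u^* = (bq (omega_d C d) (qmul (td d) (nd d) u1 u2 q))^*.
    by rewrite -e1 rmorphM.
  rewrite /Qf -e2 -e1.
  have -> : (qa (qmul (td d) (nd d) u1 u2 q)) = qa q by [].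
  have -> : (qc (qmul (td d) (nd d) u1 u2 q)) = qc q by [].
  transitivity ((qa q)%:~R * (u * u^*) * z * w + bq (omega_d C d) q * u * z + (bq (omega_d C d) q)^* * u^* * w
     + (qc q)%:~R); first by ring.
  by rewrite huu; ring.
-
  apply: (ev_dense (f := lin 1 0) (g := lin 1 0)); rewrite ?lin_neq0 ?oner_eq0 //.
  move=> z w; rewrite !lin_ev !mul1r !addr0 => hz hw.
  rewrite evD (ev_slash_1 Delta k hd) /mat_S.
  rewrite (ev_slash_mx2 Delta k hd (E := fun q => negq (sig3 (td d) q))).
  + exact: (comb3 Delta ht hn (GN' z w)).
  + by rewrite mul1r addr0.
  + by rewrite rmorph1 rmorph0 mul1r addr0.
  + by move=> q; apply: tr_S.
-
  have eA : mat_T C *m mat_S C *m mat_eps C = mx2 (-1) (-1) (-1) 0.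
    by rewrite /mat_T /mat_S /mat_eps !mx2_mul; congr mx2; ring.
  apply: (ev_dense (f := lin 1 0) (g := lin 1 0)); rewrite ?lin_neq0 ?oner_eq0 //.
  move=> z w; rewrite !lin_ev !mul1r !addr0 => hz hw.
  rewrite evB evD (ev_slash_1 Delta k hd) eA /mat_T.
  rewrite (ev_slash_mx2 Delta k hd (E := Am (td d))); first last.
  + by move=> q; apply: tr_TSe.
  + by rewrite rmorphN rmorph1 rmorph0 addr0 mulN1r oppr_eq0.
  + by rewrite addr0 mulN1r oppr_eq0.
  rewrite (ev_slash_mx2 Delta k hd (E := Bm (td d))); first last.
  + by move=> q; apply: tr_T.
  + by rewrite rmorph0 rmorph1 mul0r add0r oner_eq0.
  + by rewrite mul0r add0r oner_eq0.
  exact: (comb4 ht hn hN (GN' z w)).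
-
  move=> d7 w0 Tw; subst d.
  have ew : w0 = omega_d C 7 by [].
  have Hc7 : (omega_d C 7)^* = 1%:~R - omega_d C 7 := Hc'.
  have Hs7 : omega_d C 7 ^+ 2 = 1%:~R * omega_d C 7 - 2%:~R := Hs'.
  have hN7 : forall x y, Nf 1 2 x y != Delta%:Z := hN.
  have eTw : Tw = mx2 1 (omega_d C 7) 0 1 by [].
  have eTi : invmx (mat_T C) = mx2 1 (-1) 0 1.
    by apply: mx2_inv; rewrite /mat_T mx2_mul mx2_1; congr mx2; ring.
  have eTwi : invmx Tw = mx2 1 (- omega_d C 7) 0 1.
    by rewrite eTw; apply: mx2_inv; rewrite mx2_mul mx2_1; congr mx2; ring.
  have eM3 : mat_S C *m invmx (mat_T C) *m Tw *m mat_S C = mx2 (-1) 0 (omega_d C 7 - 1) (-1).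
    by rewrite eTi eTw /mat_S !mx2_mul; congr mx2; ring.
  have eM4 : mat_T C *m invmx Tw *m mat_S C *m Tw = mx2 (1 - omega_d C 7) 1 1 (omega_d C 7).
    rewrite eTwi eTw /mat_T /mat_S !mx2_mul; congr mx2; ring: Hs7.
  rewrite eM3 eM4 eTw.
  apply: (ev_dense (f := lin (omega_d C 7 - 1) (-1) * lin 1 (omega_d C 7))
                   (g := lin ((omega_d C 7 - 1)^*) ((-1)^*) * lin (1^*) ((omega_d C 7)^*))).
  + by rewrite mulf_neq0 // lin_neq0 // ?oppr_eq0 ?oner_eq0 ?orbT.
  + by rewrite mulf_neq0 // lin_neq0 // ?conjC_eq0 ?oppr_eq0 ?oner_eq0 ?orbT.
  move=> z w; rewrite !hornerM !lin_ev !mulf_eq0 !negb_or => /andP[hz1 hz2] /andP[hw1 hw2].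
  rewrite !evB (ev_slash_1 Delta k hd).
  rewrite (ev_slash_mx2 Delta k hd (E := E1)); first last.
  + by move=> q; apply: tr_Tw.
  + by rewrite rmorph0 rmorph1 mul0r add0r oner_eq0.
  + by rewrite mul0r add0r oner_eq0.
  rewrite (ev_slash_mx2 Delta k hd (E := E3)); first last.
  + by move=> q; apply: tr_M3.
  + by [].
  + by [].
  rewrite (ev_slash_mx2 Delta k hd (E := E4)); first last.
  + by move=> q; apply: tr_M4.
  + by [].
  + by [].
  exact: (comb5 hN7 (GN' z w)).
Qed.
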